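(* Let $\mathcal{G}$ be a strongly connected directed graph on $[N]$ containing all self-loops, and let $\epsilon,C_1,C_2>0$. Let $\{M^{(t)}\}_{t\ge0}=\{D^{(t)}A^{(t)}\}_{t\ge0}$ be a sequence in $\mathcal{M}_{\mathcal{G},\epsilon,C_1,C_2}$ and let $P^{(t)}=M^{(t)}M^{(t-1)}\cdots M^{(0)}$. Then the sequence of partial products $\{P^{(t)}\}_{t\ge0}$ is ergodic: there exists a sequence of entrywise positive rank one matrices $\{S^{(t)}\}_{t\ge0}$ such that $\lim_{t\to\infty}P^{(t)}_{ij}/S^{(t)}_{ij}=1$ for all $i,j\in[N]$.
   Context: $\mathcal{A}_{\mathcal{G},\epsilon}$ is the set of $N\times N$ row-stochastic matrices $A$ with $\epsilon\le A_{ij}\le1$ if $(j,i)\in E(\mathcal{G})$ and $A_{ij}=0$ if $(j,i)\notin E(\mathcal{G})$. $\mathcal{D}_{C_1,C_2}$ is the set of diagonal matrices $\mathrm{diag}(\mathbf{d})$ with $C_1\le\mathbf{d}_i\le C_2$ for all $i$. $\mathcal{M}_{\mathcal{G},\epsilon,C_1,C_2}=\{DA: D\in\mathcal{D}_{C_1,C_2},\ A\in\mathcal{A}_{\mathcal{G},\epsilon}\}$. Strongly connected: any two distinct nodes are mutually reachable by directed paths. *)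

(* Defs.v *)
From HB Require Import structures.
From mathcomp Require Import all_boot all_order all_algebra.
From mathcomp Require Import all_classical all_reals all_analysis.
Set Implicit Arguments. Unset Strict Implicit. Unset Printing Implicit Defensive.
Import Order.TTheory GRing.Theory Num.Theory.
Local Open Scope ring_scope.

(* A directed graph on [N] = 'I_N is an edge relation E : rel 'I_N,
   where E j i means the directed edge (j,i) (from j to i) is in E(G). *)

Definition has_self_loops (N : nat) (E : rel 'I_N) : Prop := forall i, E i i.

Definition strongly_connected (N : nat) (E : rel 'I_N) : Prop :=
  forall i j : 'I_N, i != j -> connect E i j /\ connect E j i.

Definition row_stochastic (R : realType) (N : nat) (A : 'M[R]_N) : Prop :=
  (forall i j, 0 <= A i j) /\ (forall i, \sum_j A i j = 1).

Definition in_A (R : realType) (N : nat) (E : rel 'I_N) (eps : R) (A : 'M[R]_N) : Prop :=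
  row_stochastic A /\
  (forall i j, E j i -> eps <= A i j /\ A i j <= 1) /\
  (forall i j, ~~ E j i -> A i j = 0).

Definition in_D (R : realType) (N : nat) (C1 C2 : R) (D : 'M[R]_N) : Prop :=
  exists d : 'rV[R]_N, D = diag_mx d /\ forall i, C1 <= d 0 i <= C2.

Definition in_M (R : realType) (N : nat) (E : rel 'I_N) (eps C1 C2 : R)
  (M : 'M[R]_N) : Prop :=
  exists D A, in_D C1 C2 D /\ in_A E eps A /\ M = D *m A.

Fixpoint partial_prod (R : realType) (N : nat) (M : nat -> 'M[R]_N) (t : nat)
  : 'M[R]_N :=
  match t with
  | 0 => M 0%N
  | t'.+1 => M t'.+1 *m partial_prod M t'
  end.

(* Main.v *)
Require Import Defs.
From HB Require Import structures.
From mathcomp Require Import all_boot all_order all_algebra.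
From mathcomp Require Import all_classical all_reals all_analysis.
From mathcomp Require Import ring lra zify.
Import Order.TTheory GRing.Theory Num.Theory.
Import numFieldNormedType.Exports.
Local Open Scope classical_set_scope.
Local Open Scope ring_scope.
Set Implicit Arguments. Unset Strict Implicit.


Lemma inM_entry (R : realType) N (E : rel 'I_N) (eps C1 C2 : R) (X : 'M[R]_N) :
  in_M E eps C1 C2 X ->
  exists d : 'rV[R]_N, exists A : 'M[R]_N,
    (forall i, C1 <= d 0 i <= C2) /\ in_A E eps A /\ forall i j, X i j = d 0 i * A i j.
Proof.
case=> D [A [[d [-> hd]] [hA ->]]]; exists d, A; split=> //; split=> // i j.
by rewrite mul_diag_mx mxE.
Qed.

Lemma inM_ge0 (R : realType) N (E : rel 'I_N) (eps C1 C2 : R) (X : 'M[R]_N) :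
  0 < C1 -> in_M E eps C1 C2 X -> forall i j, 0 <= X i j.
Proof.
move=> hC1 /inM_entry [d [A [hd [[[hA0 _] _] hX]]]] i j.
have /andP[h1 _] := hd i; rewrite hX.
by rewrite mulr_ge0 // (le_trans (ltW hC1)).
Qed.

Lemma inM_edge (R : realType) N (E : rel 'I_N) (eps C1 C2 : R) (X : 'M[R]_N) :
  0 < C1 -> 0 < eps -> in_M E eps C1 C2 X -> forall i j, E j i -> C1 * eps <= X i j.
Proof.
move=> hC1 he /inM_entry [d [A [hd [[_ [hE _]] hX]]]] i j hij.
have /andP[h1 _] := hd i. have [h2 _] := hE i j hij. rewrite hX.
by rewrite ler_pM // ltW.
Qed.

Lemma inM_rowsum (R : realType) N (E : rel 'I_N) (eps C1 C2 : R) (X : 'M[R]_N) :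
  0 < C1 -> in_M E eps C1 C2 X -> forall i, \sum_j X i j <= C2.
Proof.
move=> hC1 /inM_entry [d [A [hd [[[_ hs] _] hX]]]] i.
under eq_bigr do rewrite hX. rewrite -mulr_sumr hs mulr1. by have /andP[_ ->] := hd i.
Qed.

Lemma le_sum_term (R : realType) N (F : 'I_N -> R) k :
  (forall j, 0 <= F j) -> F k <= \sum_j F j.
Proof.
move=> h; rewrite (bigD1 k) //= lerDl sumr_ge0 // => j _; exact: h.
Qed.

Fixpoint prodM (R : realType) (N : nat) (M : nat -> 'M[R]_N) (s n : nat) : 'M[R]_N :=
  match n with 0 => 1%:M | n'.+1 => M (s + n')%N *m prodM M s n' end.

Lemma prodM_split (R : realType) N (M : nat -> 'M[R]_N) s n :
  prodM M 0 (s + n) = prodM M s n *m prodM M 0 s.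
Proof.
elim: n => [|n IH]; first by rewrite addn0 /= mul1mx.
by rewrite addnS /= IH add0n mulmxA.
Qed.

Lemma partial_prodE (R : realType) N (M : nat -> 'M[R]_N) t :
  partial_prod M t = prodM M 0 t.+1.
Proof.
elim: t => [|t IH]; first by rewrite /= mulmx1.
by rewrite /= IH add0n.
Qed.

Lemma prodM_ge0 (R : realType) N (E : rel 'I_N) (eps C1 C2 : R) (M : nat -> 'M[R]_N) :
  0 < C1 -> (forall t, in_M E eps C1 C2 (M t)) ->
  forall s n i k, 0 <= prodM M s n i k.
Proof.
move=> hC1 hM s; elim=> [|n IH] i k /=; first by rewrite mxE ler0n.
rewrite mxE sumr_ge0 // => j _; rewrite mulr_ge0 //; exact: inM_ge0 (hM _) _ _.
Qed.

Lemma prodM_rowsum (R : realType) N (E : rel 'I_N) (eps C1 C2 : R) (M : nat -> 'M[R]_N) :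
  0 < C1 -> 0 < C2 -> (forall t, in_M E eps C1 C2 (M t)) ->
  forall s n i, \sum_k prodM M s n i k <= C2 ^+ n.
Proof.
move=> hC1 hC2 hM s; elim=> [|n IH] i /=.
  rewrite (bigD1 i) //= mxE eqxx big1 ?addr0 // => k hk.
  by rewrite mxE eq_sym (negbTE hk).
under eq_bigr do rewrite mxE.
rewrite exchange_big /=.
under eq_bigr do rewrite -mulr_sumr.
apply: (@le_trans _ _ (\sum_j M (s + n)%N i j * C2 ^+ n)).
  apply: ler_sum => j _; apply: ler_wpM2l; [exact: inM_ge0 (hM _) _ _|exact: IH].
rewrite -mulr_suml exprS; apply: ler_wpM2r; first by rewrite exprn_ge0 ?ltW.
exact: inM_rowsum (hM _) _.
Qed.

Lemma prodM_le (R : realType) N (E : rel 'I_N) (eps C1 C2 : R) (M : nat -> 'M[R]_N) :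
  0 < C1 -> 0 < C2 -> (forall t, in_M E eps C1 C2 (M t)) ->
  forall s n i k, prodM M s n i k <= C2 ^+ n.
Proof.
move=> hC1 hC2 hM s n i k.
apply: le_trans; last exact: (prodM_rowsum hC1 hC2 hM s n i).
apply: le_sum_term => j; exact: prodM_ge0 hC1 hM _ _ _ _.
Qed.

Lemma prodM_walk (R : realType) N (E : rel 'I_N) (eps C1 C2 : R) (M : nat -> 'M[R]_N) :
  0 < C1 -> 0 < eps -> has_self_loops E -> (forall t, in_M E eps C1 C2 (M t)) ->
  forall s n k p, path E k p -> (size p <= n)%N ->
  (C1 * eps) ^+ n <= prodM M s n (last k p) k.
Proof.
move=> hC1 he hL hM s; elim=> [|n IH] k p hp hs.
  by case: p hp hs => // _ _ /=; rewrite mxE eqxx expr0.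
have hc : 0 <= C1 * eps by rewrite mulr_ge0 // ltW.
have key : forall u v, E u v -> (C1 * eps) ^+ n <= prodM M s n u k ->
    (C1 * eps) ^+ n.+1 <= prodM M s n.+1 v k.
  move=> u v huv hu /=; rewrite mxE exprS.
  apply: (@le_trans _ _ (M (s + n)%N v u * prodM M s n u k)).
    by rewrite ler_pM ?exprn_ge0 //; exact: inM_edge (hM _) _ _ _.
  have H := @le_sum_term R N (fun j => M (s + n)%N v j * prodM M s n j k) u. simpl in H. apply: H => j; rewrite mulr_ge0 //; [exact: inM_ge0 (hM _) _ _|exact: prodM_ge0 hC1 hM _ _ _ _].
case/lastP: p hp hs => [|p' v] hp hs.
  by apply: key (hL k) _; exact: (IH k [::]).
rewrite rcons_path in hp; case/andP: hp => hp' hev.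
rewrite last_rcons; apply: key hev _; apply: IH => //.
by rewrite size_rcons in hs.
Qed.


Lemma sum_bounds (R : realType) N (Q x y : 'I_N -> R) (m m2 : R) :
  (forall k, 0 <= Q k) -> (forall k, m * x k <= y k <= m2 * x k) ->
  m * (\sum_k Q k * x k) <= \sum_k Q k * y k <= m2 * (\sum_k Q k * x k).
Proof.
move=> hQ hb; rewrite !mulr_sumr; apply/andP; split; apply: ler_sum => k _;
  have /andP[h1 h2] := hb k.
- by rewrite mulrCA ler_wpM2l.
- by rewrite mulrCA ler_wpM2l.
Qed.

Lemma contract_step (R : realType) N (Q : 'I_N -> 'I_N -> R) (x y : 'I_N -> R) (a b m w : R) :
  0 < a -> 0 < b -> (forall i k, a <= Q i k <= b) -> (forall k, 0 < x k) ->
  (forall k, m * x k <= y k <= (m + w) * x k) ->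
  exists m', m <= m' /\ forall i,
    m' * (\sum_k Q i k * x k) <= \sum_k Q i k * y k <=
    (m' + (1 - a / b) * w) * (\sum_k Q i k * x k).
Proof.
move=> ha hb hQ hx hy.
set X := \sum_k x k.
set z := fun k => y k - m * x k.
have hz : forall k, 0 <= z k <= w * x k.
  move=> k; have /andP[h1 h2] := hy k; rewrite /z subr_ge0 h1 /= lerBlDl.
  by rewrite -mulrDl.
have hZ : 0 <= \sum_k z k by apply: sumr_ge0 => k _; case/andP: (hz k).
exists (m + a / (b * X) * \sum_k z k); split.
  rewrite lerDl; apply: mulr_ge0 => //; apply: divr_ge0; [exact: ltW| apply: mulr_ge0; [exact: ltW| apply: sumr_ge0 => k _; exact: ltW]].
move=> i.
have hX : 0 < X by apply: lt_le_trans (hx i) _; apply: le_sum_term => k; exact: ltW.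
set S := \sum_k Q i k * x k.
have hSX : S <= b * X.
  rewrite /S /X mulr_sumr; apply: ler_sum => k _; apply: ler_wpM2r; first exact: ltW.
  by case/andP: (hQ i k).
set c := fun k => Q i k - a * S / (b * X).
have hc : forall k, 0 <= c k.
  move=> k; rewrite /c subr_ge0; case/andP: (hQ i k) => hak _; apply: le_trans hak.
  rewrite -mulrA; apply: ler_piMr; first exact: ltW. by rewrite ler_pdivrMr ?mul1r // mulr_gt0.
have eq1 : \sum_k Q i k * y k - (m + a / (b * X) * \sum_k z k) * S = \sum_k c k * z k.
  have e1 : \sum_k c k * z k = \sum_k Q i k * z k - a * S / (b * X) * \sum_k z k.
    rewrite mulr_sumr -sumrB; apply: eq_bigr => k _; rewrite /c; ring.
  have e2 : \sum_k Q i k * z k = \sum_k Q i k * y k - m * S.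
    rewrite /S mulr_sumr -sumrB; apply: eq_bigr => k _; rewrite /z; ring.
  rewrite e1 e2; ring.
have e3 : \sum_k c k * x k = (1 - a / b) * S.
  have -> : \sum_k c k * x k = S - a * S / (b * X) * X.
    rewrite /X mulr_sumr -sumrB; apply: eq_bigr => k _; rewrite /c; ring.
  by field; rewrite ?gt_eqF // mulr_gt0.
have hle : \sum_k c k * z k <= w * \sum_k c k * x k.
  rewrite mulr_sumr; apply: ler_sum => k _; rewrite mulrCA; apply: ler_wpM2l => //.
  by case/andP: (hz k).
apply/andP; split.
  by rewrite -subr_ge0 eq1; apply: sumr_ge0 => k _; apply: mulr_ge0 => //; case/andP: (hz k).
move: hle eq1; rewrite e3. set T := \sum_k c k * z k. set U := \sum_k Q i k * y k.
set V := \sum_k z k. move=> hle eq1. nra.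
Qed.


Lemma ratio_bound (R : realType) (m d xi xo yi yo : R) :
  0 < m -> 0 < xi -> 0 < xo -> m * xi <= yi <= (m + d) * xi ->
  m * xo <= yo <= (m + d) * xo -> `|1 - yi / (xi * (yo / xo))| <= d / m.
Proof.
move=> hm hxi hxo /andP[h1 h2] /andP[h3 h4].
have hyo : 0 < yo by apply: lt_le_trans h3; rewrite mulr_gt0.
have hd : 0 <= d.
  have : m * xi <= (m + d) * xi := le_trans h1 h2. rewrite ler_pM2r //. lra.
have [k hk hdk] : exists2 k, 0 <= k & d = k * m.
  by exists (d / m); [rewrite divr_ge0 // ltW | rewrite divfK // gt_eqF].
subst d.
have -> : 1 - yi / (xi * (yo / xo)) = (xi * yo - yi * xo) / (xi * yo).
  by field; apply/and3P; split; rewrite gt_eqF.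
rewrite mulfK ?gt_eqF // normrM normfV (gtr0_norm (mulr_gt0 hxi hyo)) ler_pdivrMr ?mulr_gt0 //.
have key : k * m * xi * xo <= k * (xi * yo).
  have := ler_wpM2l (mulr_ge0 hk (ltW hxi)) h3. lra.
have p1 := ler_wpM2l (ltW hxi) h4. have p2 := ler_wpM2r (ltW hxo) h1.
have p3 := ler_wpM2r (ltW hxo) h2. have p4 := ler_wpM2l (ltW hxi) h3.
rewrite ler_norml; apply/andP; split; lra.
Qed.

Lemma prodM_pos (R : realType) N (E : rel 'I_N) (eps C1 C2 : R) (M : nat -> 'M[R]_N) :
  0 < C1 -> 0 < eps -> strongly_connected E -> has_self_loops E ->
  (forall t, in_M E eps C1 C2 (M t)) ->
  forall s n, (N <= n)%N -> forall i k, (C1 * eps) ^+ n <= prodM M s n i k.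
Proof.
move=> hC1 he hS hL hM s n hn i k.
case: (eqVneq k i) => [<-|hki].
  exact: (prodM_walk hC1 he hL hM s (p:=[::])).
have [hc _] := hS k i hki.
case/connectP: hc => p hp ->.
case: (shortenP hp) => p' hp' hu _.
apply: prodM_walk => //.
move/card_uniqP: hu => hu.
have := max_card (mem (k :: p')). rewrite card_ord hu /=. lia.
Qed.

Unset Implicit Arguments. Set Strict Implicit.

Theorem mainTheorem9 (R : realType) (N : nat) (E : rel 'I_N)
  (eps C1 C2 : R) (M : nat -> 'M[R]_N) :
  (0 < N)%N -> strongly_connected E -> has_self_loops E ->
  0 < eps -> 0 < C1 -> 0 < C2 ->
  (forall t, in_M E eps C1 C2 (M t)) ->
  exists S : nat -> 'M[R]_N,
    (forall t, \rank (S t) = 1%N /\ forall i j, 0 < S t i j) /\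
    (forall i j : 'I_N,
       (fun t : nat => partial_prod M t i j / S t i j) @ \oo --> (1 : R)).
Proof.
move=> hN hS hL he hC1 hC2 hM.
pose o := Ordinal hN.
pose c := C1 * eps.
have hc : 0 < c by rewrite mulr_gt0.
pose P t := prodM M 0 t.
have Ppos : forall t, (N <= t)%N -> forall i k, 0 < P t i k.
  move=> t ht i k; apply: lt_le_trans (prodM_pos hC1 he hS hL hM 0 ht i k).
  exact: exprn_gt0.
pose u t i := if (N <= t.+1)%N then P t.+1 i o else 1.
pose v t j := if (N <= t.+1)%N then P t.+1 o j / P t.+1 o o else 1.
have upos : forall t i, 0 < u t i.
  move=> t i; rewrite /u; case: ifP => // h; exact: Ppos.
have vpos : forall t j, 0 < v t j.
  move=> t j; rewrite /v; case: ifP => // h; rewrite divr_gt0 //; exact: Ppos.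
have Sent : forall t i j, (\col_i0 u t i0 *m \row_j0 v t j0) i j = u t i * v t j.
  by move=> t i j; rewrite mxE big_ord1 !mxE.
exists (fun t => \col_i0 u t i0 *m \row_j0 v t j0); split.
  move=> t; split; last by move=> i j; rewrite Sent mulr_gt0.
  apply/eqP; rewrite eqn_leq; apply/andP; split.
    exact: leq_trans (mxrankM_maxl _ _) (rank_leq_col _).
  rewrite lt0n mxrank_eq0; apply/eqP => h0.
  have := Sent t o o; rewrite h0 mxE => /esym/eqP; rewrite mulf_eq0 !gt_eqF //.
move=> i j.
pose x t k := P t k o. pose y t k := P t k j.
pose a := c ^+ N. pose b := C2 ^+ N. pose q := 1 - a / b.
pose lo := a / b. pose hi := b / a. pose D := hi - lo.
have ha : 0 < a by rewrite exprn_gt0.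
have hb : 0 < b by rewrite exprn_gt0.
have Plo : forall s i k, a <= prodM M s N i k by move=> s i0 k; exact: (prodM_pos hC1 he hS hL hM s (leqnn N)).
have Phi : forall s i k, prodM M s N i k <= b by move=> s i0 k; exact: (prodM_le hC1 hC2 hM).
have hab : a <= b := le_trans (Plo 0%N o o) (Phi 0%N o o).
have step : forall t m m2, (forall k, m * x t k <= y t k <= m2 * x t k) ->
    forall k, m * x t.+1 k <= y t.+1 k <= m2 * x t.+1 k.
  move=> t m m2 h k; rewrite /x /y /P /= !mxE add0n.
  exact: sum_bounds (fun l => inM_ge0 hC1 (hM t) k l) h.
have stay : forall t m m2 d, (forall k, m * x t k <= y t k <= m2 * x t k) ->
    forall k, m * x (t + d)%N k <= y (t + d)%N k <= m2 * x (t + d)%N k.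
  move=> t m m2 d h; elim: d => [|d IH]; first by rewrite addn0.
  rewrite addnS; exact: step IH.
have base : forall k, lo * x N k <= y N k <= hi * x N k.
  move=> k; rewrite /x /y /P; apply/andP; split.
    apply: (le_trans _ (Plo 0%N k j)); rewrite /lo mulrAC ler_pdivrMr //.
    by apply: ler_wpM2l; [exact: ltW | exact: Phi].
  apply: (le_trans (Phi 0%N k j)); rewrite /hi mulrAC ler_pdivlMr //.
  by apply: ler_wpM2l; [exact: ltW | exact: Plo].
have claim : forall n d, exists m, lo <= m /\ forall k,
    m * x (N + n * N + d)%N k <= y (N + n * N + d)%N k <=
    (m + q ^+ n * D) * x (N + n * N + d)%N k.
  elim=> [|n IH] d.
    exists lo; split=> //; rewrite mul0n addn0 expr0 mul1r /D addrC subrK.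
    exact: stay base.
  have -> : (N + n.+1 * N + d = (N + n * N + d) + N)%N by rewrite mulSn; lia.
  set s := (N + n * N + d)%N.
  have [m [hlo hm]] := IH d.
  have hx : forall k, 0 < x s k by move=> k; apply: Ppos; rewrite /s; lia.
  have [m' [hmm' hm']] := @contract_step R N (fun i0 k => prodM M s N i0 k) (x s) (y s)
      a b m (q ^+ n * D) ha hb (fun i0 k => introT andP (conj (Plo s i0 k) (Phi s i0 k))) hx hm.
  exists m'; split; first exact: le_trans hlo hmm'.
  move=> k; have := hm' k.
  rewrite /x /y /P prodM_split !mxE.
  by rewrite exprS -mulrA.
have hlo : 0 < lo by rewrite divr_gt0.
have hq0 : 0 <= q by rewrite subr_ge0 ler_pdivrMr // mul1r.
have hq : `|q| < 1 by rewrite ger0_norm // ltrBlDr ltrDl divr_gt0.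
apply/cvgrPdist_le => e he0.
have hD1 : 0 < `|D| + 1 by have := normr_ge0 D; lra.
have he' : 0 < e * lo / (`|D| + 1) by apply: divr_gt0 => //; apply: mulr_gt0.
have := @cvg_expr R q hq.
move/(@cvgrPdist_lt _ _ _ _ _ _ _) => /(_ _ he') [T _ HT].
have {HT} HT := HT T (leqnn T).
rewrite /= sub0r normrN ger0_norm ?exprn_ge0 // in HT.
rewrite ltr_pdivlMr // in HT.
exists (N + T * N)%N => // t ht. 
have [m [hlom hm]] := claim T (t.+1 - (N + T * N))%N.
have ht1 : (N + T * N <= t.+1)%N := leq_trans ht (leqnSn t).
rewrite subnKC in hm; last exact: ht1.
have hNt : (N <= t.+1)%N := leq_trans (leq_addr _ _) ht1.
rewrite partial_prodE Sent /u /v hNt.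
have hm0 : 0 < m := lt_le_trans hlo hlom.
have hxi := Ppos _ hNt i o. have hxo := Ppos _ hNt o o.
apply: le_trans (ratio_bound hm0 hxi hxo (hm i) (hm o)) _.
rewrite ler_pdivrMr //.
have h1 : q ^+ T * D <= q ^+ T * (`|D| + 1).
  by apply: ler_wpM2l; [rewrite exprn_ge0 | apply: le_trans (ler_norm D) _; rewrite lerDl].
have h2 : e * lo <= e * m by apply: ler_wpM2l => //; exact: ltW.
lra.
Qed.
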